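(* Let $R$ be a commutative ring of Krull dimension $0$ which is integral over an Artinian subring $R_0$, write $\mathcal{F}=\mathcal{F}(R_0,R)$, and let $n\ge 1$. If $R$ is not Noetherian, then the ring of Artinian power series $S=\mathcal{F}\llbracket X_1,\ldots,X_n\rrbracket$ is not Noetherian, and $S$ is strictly contained in the formal power series ring $R\llbracket X_1,\ldots,X_n\rrbracket$.
   Context: All rings are commutative with identity, and subrings share the identity. For a $0$-dimensional ring $R$ and an Artinian subring $R_0\subseteq R$ such that $R$ is integral over $R_0$, let $\mathcal{F}(R_0,R)=\{R_\alpha\}$ denote the family of all subrings of $R$ that are finitely generated as $R_0$-algebras; this family is directed, each $R_\alpha$ is Artinian, and $R=\bigcup_\alpha R_\alpha$. The ring of Artinian power series $\mathcal{F}\llbracket X_1,\ldots,X_n\rrbracket$ is the set of all $f\in R\llbracket X_1,\ldots,X_n\rrbracket$ such that all coefficients of $f$ lie in a single $R_\alpha\in\mathcal{F}$; equivalently, $\mathcal{F}\llbracket X_1,\ldots,X_n\rrbracket=\bigcup_\alpha R_\alpha\llbracket X_1,\ldots,X_n\rrbracket$, which is a subring of $R\llbracket X_1,\ldots,X_n\rrbracket$. *)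

(* Defs.v *)
From HB Require Import structures.
From mathcomp Require Import all_boot all_order all_algebra.
Set Implicit Arguments. Unset Strict Implicit. Unset Printing Implicit Defensive.
Import Order.TTheory GRing.Theory Num.Theory.
Local Open Scope ring_scope.

(* I is an ideal of the subring S (of an ambient type T with zero, addition,
   multiplication): I is contained in S, contains 0, is closed under addition
   and under multiplication by elements of S (closure under negation follows
   from multiplication by -1 \in S). *)
Definition is_ideal (T : Type) (zero : T) (add mul : T -> T -> T)
    (S : T -> Prop) (I : T -> Prop) : Prop :=
  [/\ (forall x, I x -> S x), I zero,
      (forall x y, I x -> I y -> I (add x y)) &
      (forall a x, S a -> I x -> I (mul a x))].

Definition noetherian_in (T : Type) (zero : T) (add mul : T -> T -> T)
    (S : T -> Prop) : Prop :=
  forall I : nat -> T -> Prop,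
    (forall k, is_ideal zero add mul S (I k)) ->
    (forall k x, I k x -> I k.+1 x) ->
    exists N, forall k, (N <= k)%N -> forall x, I k x <-> I N x.

Definition artinian_in (T : Type) (zero : T) (add mul : T -> T -> T)
    (S : T -> Prop) : Prop :=
  forall I : nat -> T -> Prop,
    (forall k, is_ideal zero add mul S (I k)) ->
    (forall k x, I k.+1 x -> I k x) ->
    exists N, forall k, (N <= k)%N -> forall x, I k x <-> I N x.

Definition ring_ideal (R : pzRingType) (S : R -> Prop) (I : R -> Prop) :=
  is_ideal 0 +%R *%R S I.
Definition ring_noetherian (R : pzRingType) (S : R -> Prop) :=
  noetherian_in 0 +%R *%R S.
Definition ring_artinian (R : pzRingType) (S : R -> Prop) :=
  artinian_in 0 +%R *%R S.

Definition prime_ideal (R : comNzRingType) (P : R -> Prop) :=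
  [/\ ring_ideal (fun _ => True) P, ~ P 1 &
      forall a b, P (a * b) -> P a \/ P b].

Definition maximal_ideal (R : comNzRingType) (M : R -> Prop) :=
  [/\ ring_ideal (fun _ => True) M, ~ M 1 &
      forall J, ring_ideal (fun _ => True) J -> (forall x, M x -> J x) ->
        (forall x, J x <-> M x) \/ J 1].

Definition krull_dim0 (R : comNzRingType) :=
  (exists P : R -> Prop, prime_ideal P) /\
  forall P : R -> Prop, prime_ideal P -> maximal_ideal P.

Definition integral_over (R : comNzRingType) (R0 : {pred R}) :=
  forall x : R, exists p : {poly R},
    [/\ p \is monic, p \is a polyOver R0 & root p x].

Definition gen_subring (R : comNzRingType) (R0 : {pred R}) (s : seq R) (x : R) :=
  forall T : {pred R}, subring_closed T -> {subset R0 <= T} ->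
    {subset s <= T} -> x \in T.

(* The members of F(R0,R) are exactly the subrings [gen_subring R0 s], s : seq R. *)

(* Monomials X^m, m : 'I_n -> nat (exponent vectors). *)
Definition mono (n : nat) := {ffun 'I_n -> nat}.

Definition pser (R : Type) (n : nat) := mono n -> R.

Definition ps_zero (R : pzRingType) (n : nat) : pser R n := fun _ => 0.
Definition ps_add (R : pzRingType) (n : nat) (f g : pser R n) : pser R n :=
  fun m => f m + g m.
(* Cauchy product: (fg)_m = sum over a <= m (pointwise) of f_a * g_(m-a).
   Each a <= m is enumerated once as an element of {ffun 'I_n -> 'I_(d+1)},
   d = max_i m_i. *)
Definition ps_mul (R : pzRingType) (n : nat) (f g : pser R n) : pser R n :=
  fun m =>
    \sum_(a : {ffun 'I_n -> 'I_((\max_(i < n) m i).+1)} |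
            [forall i, (a i <= m i)%N])
      f [ffun i => nat_of_ord (a i)] * g [ffun i => (m i - a i)%N].

(* The ring of Artinian power series F[[X_1..X_n]]: all coefficients lie in a
   single member of F(R0,R). *)
Definition artinian_pser (R : comNzRingType) (R0 : {pred R}) (n : nat)
    (f : pser R n) : Prop :=
  exists s : seq R, forall m, gen_subring R0 s (f m).

(* Main.v *)
Require Import Defs.
From HB Require Import structures.
From mathcomp Require Import all_boot all_order all_algebra.
From mathcomp Require Import ring.
From Stdlib Require Import Classical ClassicalEpsilon.
Set Implicit Arguments. Unset Strict Implicit. Unset Printing Implicit Defensive.
Import Order.TTheory GRing.Theory Num.Theory.
Local Open Scope ring_scope.

Definition psub (R : Type) (P Q : R -> Prop) := forall x, P x -> Q x.
Definition peq (R : Type) (P Q : R -> Prop) := forall x, P x <-> Q x.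

Record subr (R : comNzRingType) (A : R -> Prop) : Prop := Subr {
  sr1 : A 1; srB : forall x y, A x -> A y -> A (x - y);
  srM : forall x y, A x -> A y -> A (x * y) }.

Definition modl (R : comNzRingType) (A : R -> Prop) (P : R -> Prop) :=
  [/\ P 0, (forall x y, P x -> P y -> P (x + y)) &
      (forall a x, A a -> P x -> P (a * x))].

Definition dcc_in (R : comNzRingType) (A M : R -> Prop) :=
  forall N : nat -> R -> Prop, (forall k, modl A (N k) /\ psub (N k) M) ->
    (forall k, psub (N k.+1) (N k)) ->
    exists n0, forall k, (n0 <= k)%N -> peq (N k) (N n0).

Definition acc_in (R : comNzRingType) (A M : R -> Prop) :=
  forall N : nat -> R -> Prop, (forall k, modl A (N k) /\ psub (N k) M) ->
    (forall k, psub (N k) (N k.+1)) ->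
    exists n0, forall k, (n0 <= k)%N -> peq (N k) (N n0).

Section Basic.
Lemma sr0 (R : comNzRingType) (A : R -> Prop) : subr A -> A 0.
Proof. by case=> h1 hB _; rewrite -(subrr 1); apply: hB. Qed.
Lemma srN (R : comNzRingType) (A : R -> Prop) x : subr A -> A x -> A (- x).
Proof. move=> hA hx; rewrite -sub0r; apply: (srB hA) => //; exact: sr0. Qed.
Lemma srD (R : comNzRingType) (A : R -> Prop) x y : subr A -> A x -> A y -> A (x + y).
Proof. move=> hA hx hy; rewrite -(opprK y); apply: (srB hA) => //; exact: srN. Qed.

Lemma modlN (R : comNzRingType) (A P : R -> Prop) x : subr A -> modl A P -> P x -> P (- x).
Proof. move=> hA [_ _ hM] hx; rewrite -mulN1r; apply: hM => //; apply: srN => //; exact: sr1. Qed.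
Lemma modlB (R : comNzRingType) (A P : R -> Prop) x y : subr A -> modl A P -> P x -> P y -> P (x - y).
Proof. move=> hA hP hx hy; case: (hP) => _ hD _; apply: hD => //; exact: (modlN hA hP). Qed.
End Basic.

Lemma chain_dec (R : Type) (N : nat -> R -> Prop) :
  (forall k, psub (N k.+1) (N k)) -> forall i j, (i <= j)%N -> psub (N j) (N i).
Proof.
move=> h i j hij; rewrite -(subnK hij); elim: (j - i)%N => [|d IH] x /=; first by [].
by rewrite addSn => /h /IH.
Qed.
Lemma chain_inc (R : Type) (N : nat -> R -> Prop) :
  (forall k, psub (N k) (N k.+1)) -> forall i j, (i <= j)%N -> psub (N i) (N j).
Proof.
move=> h i j hij; rewrite -(subnK hij); elim: (j - i)%N => [|d IH] x /=; first by [].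
by rewrite addSn => /IH /h.
Qed.

Fixpoint span (R : comNzRingType) (A : R -> Prop) (L : seq R) : R -> Prop :=
  match L with
  | [::] => fun z => z = 0
  | x :: L' => fun z => exists a w, [/\ A a, span A L' w & z = a * x + w]
  end.

Lemma modl_span (R : comNzRingType) (A : R -> Prop) L : subr A -> modl A (span A L).
Proof.
move=> hA; elim: L => [|x L [h0 hD hM]] /=.
  by split=> [|x y -> ->|a x _ ->]; rewrite ?addr0 ?mulr0.
split.
- by exists 0, 0; rewrite mul0r addr0; split=> //; exact: sr0.
- move=> _ _ [a [w [ha hw ->]]] [b [v [hb hv ->]]]; exists (a + b), (w + v).
  split; [exact: srD | exact: hD | by rewrite mulrDl; ring].
- move=> c _ hc [a [w [ha hw ->]]]; exists (c * a), (c * w).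
  split; [exact: srM | exact: hM | by rewrite mulrDr mulrA].
Qed.
Lemma dcc_span (R : comNzRingType) (A : R -> Prop) L :
  subr A -> dcc_in A A -> dcc_in A (span A L).
Proof.
move=> hA hdcc; elim: L => [|x L IH] N hN hdec.
  exists 0%N => k _ z; have [[h0 _ _] hs] := hN k; have [[h0' _ _] hs'] := hN 0%N.
  by split=> [/hs /= ->|/hs' /= ->].
pose N1 k := fun z => N k z /\ span A L z.
have [n1 Hn1] : exists n1, forall k, (n1 <= k)%N -> peq (N1 k) (N1 n1).
  apply: IH => [k|k z [h1 h2]]; last by split=> //; apply: hdec.
  have [[h0 hD hM] _] := hN k; have [s0 sD sM] := modl_span L hA.
  split=> [|z [] //]; split=> [|y z [? ?] [? ?]|a z ha [? ?]]; split; auto.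
pose C k := fun a => A a /\ exists w, span A L w /\ N k (a * x + w).
have [n2 Hn2] : exists n2, forall k, (n2 <= k)%N -> peq (C k) (C n2).
  apply: hdcc => [k|k a [ha [w [hw hN']]]]; last by split=> //; exists w; split=> //; apply: hdec.
  have [[h0 hD hM] _] := hN k; have [s0 sD sM] := modl_span L hA.
  split=> [|a [] //]; split.
  - split; first exact: sr0. by exists 0; rewrite mul0r addr0.
  - move=> a b [ha [w [hw hw']]] [hb [v [hv hv']]]; split; first exact: srD.
    exists (w + v); split; first exact: sD.
    by have := hD _ _ hw' hv'; rewrite mulrDl addrACA.
  - move=> c a hc [ha [w [hw hw']]]; split; first exact: srM.
    exists (c * w); split; first exact: sM.
    by have := hM _ _ hc hw'; rewrite mulrDr mulrA.
exists (maxn n1 n2) => k hk z; split; first by apply: (chain_dec hdec).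
move=> hz.
have hk1 : (n1 <= k)%N by apply: leq_trans hk; rewrite leq_maxl.
have hk2 : (n2 <= k)%N by apply: leq_trans hk; rewrite leq_maxr.
have hm1 : (n1 <= maxn n1 n2)%N by rewrite leq_maxl.
have hm2 : (n2 <= maxn n1 n2)%N by rewrite leq_maxr.
have [_ hsub] := hN (maxn n1 n2).
have [a [w [ha hw ez]]] := hsub _ hz.
have hC : C (maxn n1 n2) a by split=> //; exists w; rewrite -ez.
have : C k a by apply/(Hn2 _ hk2)/(Hn2 _ hm2).
move=> [_ [w' [hw' hN']]].
have hNk := hN k; have [[_ hD _] _] := hNk.
have hdiff : N1 (maxn n1 n2) (w - w').
  split; last by apply: (modlB hA (modl_span L hA)).
  have -> : w - w' = z - (a * x + w') by rewrite ez; ring.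
  apply: (modlB hA (proj1 (hN _)) hz); exact: (chain_dec hdec hk).
have [hd _] : N1 k (w - w') by apply/(Hn1 _ hk1)/(Hn1 _ hm1).
have -> : z = (a * x + w') + (w - w') by rewrite ez; ring.
exact: hD.
Qed.
Lemma modl_sum (R : comNzRingType) (A P : R -> Prop) K (F : nat -> R) :
  modl A P -> (forall i, (i < K)%N -> P (F i)) -> P (\sum_(i < K) F i).
Proof.
move=> [h0 hD _]; elim: K => [|K IH] hF; first by rewrite big_ord0.
rewrite big_ord_recr /=; apply: hD; last exact: hF.
by apply: IH => i hi; apply: hF; apply: leqW.
Qed.

Lemma sum_ext (R : comNzRingType) K K' (F : nat -> R) :
  (K <= K')%N -> (forall i, (K <= i)%N -> F i = 0) ->
  \sum_(i < K') F i = \sum_(i < K) F i.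
Proof.
move=> hK hF; rewrite -(subnK hK); elim: (K' - K)%N => [|d IH] //.
by rewrite addSn big_ord_recr /= IH hF ?addr0 // leq_addl.
Qed.

Definition cofield (R : comNzRingType) (A m : R -> Prop) :=
  [/\ modl A m, psub m A, ~ m 1 &
      forall a, A a -> ~ m a -> exists c, A c /\ m (c * a - 1)].

Lemma no_stab_witness (R : Type) (N : nat -> R -> Prop) :
  (forall k, psub (N k) (N k.+1)) ->
  ~ (exists n0, forall k, (n0 <= k)%N -> peq (N k) (N n0)) ->
  forall n0, exists p : nat * R, [/\ (n0 < p.1)%N, N p.1 p.2 & ~ N n0 p.2].
Proof.
move=> hinc Hs n0; apply: NNPP => Hn; apply: Hs; exists n0 => k hk z; split; last first.
  exact: (chain_inc hinc hk).
move=> hkz; apply: NNPP => hn; apply: Hn; exists (k, z); split=> //=.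
rewrite ltn_neqAle hk andbT; apply/eqP => ek; by apply: hn; rewrite ek.
Qed.

Lemma acc_layer (R : comNzRingType) (A M B m : R -> Prop) :
  subr A -> modl A B -> modl A M -> psub B M -> cofield A m ->
  (forall a x, m a -> M x -> B (a * x)) -> dcc_in A M ->
  forall N : nat -> R -> Prop, (forall k, [/\ modl A (N k), psub B (N k) & psub (N k) M]) ->
    (forall k, psub (N k) (N k.+1)) ->
    exists n0, forall k, (n0 <= k)%N -> peq (N k) (N n0).
Proof.
move=> hA hB hM hBM [hm hmA _ hmc] hmB hdcc N hN hinc; apply: NNPP => Hs.
have W := no_stab_witness hinc Hs.
pose f n := proj1_sig (constructive_indefinite_description _ (W n)).
have hf n : [/\ (n < (f n).1)%N, N (f n).1 (f n).2 & ~ N n (f n).2]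
  := proj2_sig (constructive_indefinite_description _ (W n)).
pose idx := fix idx j := if j is j'.+1 then (f (idx j')).1 else 0%N.
pose Q j := N (idx j).
pose y j := (f (idx j)).2.
have Qinc : forall k, psub (Q k) (Q k.+1).
  move=> k z; rewrite /Q /=; apply: chain_inc => //; have [h _ _] := hf (idx k).
  exact: ltnW.
have hyin j : Q j.+1 (y j) by have [_ h _] := hf (idx j).
have hyout j : ~ Q j (y j) by have [_ _ h] := hf (idx j).
have QM j : modl A (Q j) by have [h _ _] := hN (idx j).
have BQ j : psub B (Q j) by have [_ h _] := hN (idx j).
have QMs j : psub (Q j) M by have [_ _ h] := hN (idx j).
have yM j : M (y j) by apply: QMs (hyin j).
pose P j := fun z => exists b (a : nat -> R) K, [/\ B b, forall i, A (a i),
   forall i, (i < j)%N -> a i = 0, forall i, (K <= i)%N -> a i = 0 &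
   z = b + \sum_(i < K) a i * y i].
have hPm j : modl A (P j) /\ psub (P j) M.
  have [B0 BD BMl] := hB.
  split; last first.
    move=> _ [b [a [K [hb ha _ _ ->]]]]; have [_ MD _] := hM; apply: MD; first exact: hBM.
    apply: (@modl_sum _ A M K (fun i => a i * y i) hM) => i _; have [_ _ MMl] := hM; exact: MMl.
  split.
  - exists 0, (fun _ => 0), 0%N; split=> //; first by move=> i; exact: (sr0 hA).
    by rewrite big_ord0 addr0.
  - move=> _ _ [b [a [K [hb ha ha0 haK ->]]]] [b' [a' [K' [hb' ha' ha0' haK' ->]]]].
    exists (b + b'), (fun i => a i + a' i), (maxn K K'); split.
    + exact: BD.
    + by move=> i; apply: srD.
    + by move=> i hi; rewrite ha0 ?ha0' ?addr0.
    + by move=> i hi; rewrite haK ?haK' ?addr0 //; apply: leq_trans hi; rewrite ?leq_maxl ?leq_maxr.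
    + rewrite -(@sum_ext _ K (maxn K K') (fun i => a i * y i)) ?leq_maxl //; last by move=> i hi; rewrite haK ?mul0r.
      rewrite -(@sum_ext _ K' (maxn K K') (fun i => a' i * y i)) ?leq_maxr //; last by move=> i hi; rewrite haK' ?mul0r.
      have -> : \sum_(i < maxn K K') (a i + a' i) * y i =
        \sum_(i < maxn K K') a i * y i + \sum_(i < maxn K K') a' i * y i.
        by rewrite -big_split /=; apply: eq_bigr => i _; rewrite mulrDl.
      ring.
  - move=> c _ hc [b [a [K [hb ha ha0 haK ->]]]].
    exists (c * b), (fun i => c * a i), K; split.
    + exact: BMl. + by move=> i; apply: srM.
    + by move=> i hi; rewrite ha0 ?mulr0. + by move=> i hi; rewrite haK ?mulr0.
    + by rewrite mulrDr mulr_sumr; congr (_ + _); apply: eq_bigr => i _; rewrite mulrA.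
have Pdec k : psub (P k.+1) (P k).
  move=> _ [b [a [K [hb ha ha0 haK ->]]]]; exists b, a, K; split=> //.
  by move=> i hi; apply: ha0; apply: ltnW.
have [j0 Hj0] := hdcc P hPm Pdec.
have hyP : P j0 (y j0).
  exists 0, (fun i => if i == j0 then 1 else 0), j0.+1; split.
  - by have [B0 _ _] := hB.
  - move=> i; case: (i == j0); [exact: sr1 hA|exact: sr0 hA].
  - by move=> i hi; rewrite (ltn_eqF hi).
  - by move=> i hi; case: eqP => // ei; move: hi; rewrite ei ltnn.
  - rewrite add0r big_ord_recr /= eqxx mul1r big1 ?add0r // => i _.
    by rewrite (ltn_eqF (ltn_ord i)) mul0r.
have := Hj0 j0.+1 (leqnSn _) (y j0); move=> [_ /(_ hyP)].
move=> [b [a [K [hb ha ha0 haK ey]]]].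
have key : forall K b (a : nat -> R) u, Q j0.+1 u -> B b -> (forall i, A (a i)) ->
    (forall i, (i < j0.+1)%N -> a i = 0) -> u = b + \sum_(i < K) a i * y i -> B u.
  elim=> [|K' IH] b' a' u hu hb' ha' ha0' eu.
    by move: eu; rewrite big_ord0 addr0 => ->.
  move: eu; rewrite big_ord_recr /= => eu.
  have [hK|hK] := leqP j0.+1 K'; last first.
    apply: (IH b' a') => //; by rewrite eu ha0' // mul0r addr0.
  case: (classic (m (a' K'))) => hmK.
    apply: (IH (b' + a' K' * y K') a') => //.
      by have [_ BD _] := hB; apply: BD => //; apply: hmB.
    by rewrite eu; ring.
  exfalso; apply: (hyout K').
  have hQK : psub (Q j0.+1) (Q K') by apply: chain_inc.
  have hay : Q K' (a' K' * y K').
    have -> : a' K' * y K' = u - (b' + \sum_(i < K') a' i * y i) by rewrite eu; ring.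
    apply: (modlB hA (QM K')); first exact: hQK.
    have [_ QD _] := QM K'; apply: QD; first exact: BQ.
    apply: (@modl_sum _ A (Q K') K' (fun i => a' i * y i) (QM K')) => i hi; have [_ _ QMl] := QM K'; apply: QMl => //.
    by apply: (chain_inc Qinc hi); apply: hyin.
  have [c [hc hmc']] := hmc _ (ha' K') hmK.
  have -> : y K' = c * (a' K' * y K') - (c * a' K' - 1) * y K' by ring.
  apply: (modlB hA (QM K')); first by have [_ _ QMl] := QM K'; exact: QMl.
  by apply: BQ; apply: hmB.
have hyB : B (y j0) by apply: (key K b a (y j0) (hyin j0) hb ha ha0 ey).
by apply: (hyout j0); apply: BQ.
Qed.
Definition pmul (R : comNzRingType) (A I N : R -> Prop) : R -> Prop :=
  fun z => forall P, modl A P -> (forall a x, I a -> N x -> P (a * x)) -> P z.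

Lemma modl_pmul (R : comNzRingType) (A I N : R -> Prop) : modl A (pmul A I N).
Proof.
split=> [P [h0 _ _] _ //|x y hx hy P hP hb|a x ha hx P hP hb].
- by have [_ hD _] := hP; apply: hD; [apply: hx|apply: hy].
- by have [_ _ hM] := hP; apply: hM => //; apply: hx.
Qed.

Lemma pmul_in (R : comNzRingType) (A I N : R -> Prop) a x :
  I a -> N x -> pmul A I N (a * x).
Proof. by move=> ha hx P _ hb; apply: hb. Qed.

Lemma pmul_sub (R : comNzRingType) (A I N P : R -> Prop) :
  modl A P -> (forall a x, I a -> N x -> P (a * x)) -> psub (pmul A I N) P.
Proof. by move=> hP hb z hz; apply: hz. Qed.

Lemma pmul_le (R : comNzRingType) (A I N : R -> Prop) :
  psub I A -> modl A N -> psub (pmul A I N) N.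
Proof. move=> hI hN; apply: pmul_sub => // a x /hI ha hx; by have [_ _ hM] := hN; apply: hM. Qed.

Lemma pmul_mono (R : comNzRingType) (A I I' N N' : R -> Prop) :
  psub I I' -> psub N N' -> psub (pmul A I N) (pmul A I' N').
Proof. move=> h1 h2; apply: pmul_sub; first exact: modl_pmul.
by move=> a x /h1 ha /h2 hx; apply: pmul_in. Qed.

Lemma pmul_assoc (R : comNzRingType) (A I K N : R -> Prop) :
  psub (pmul A I (pmul A K N)) (pmul A (pmul A I K) N).
Proof.
apply: pmul_sub; first exact: modl_pmul.
move=> a x ha hx; pose P := fun x => pmul A (pmul A I K) N (a * x).
have : P x; last by [].
apply: hx.
- have [h0 hD hM] := modl_pmul A (pmul A I K) N.
  split; rewrite /P ?mulr0 //.
  + by move=> u v hu hv; rewrite mulrDr; apply: hD.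
  + by move=> c u hc hu; rewrite mulrCA; apply: hM.
- by move=> c u hc hu; rewrite /P mulrA; apply: pmul_in => //; apply: pmul_in.
Qed.

Lemma pmul_top (R : comNzRingType) (A N : R -> Prop) :
  subr A -> psub N (pmul A A N).
Proof. by move=> hA x hx; rewrite -(mul1r x); apply: pmul_in => //; exact: sr1. Qed.

Fixpoint fil (R : comNzRingType) (A : R -> Prop) (ms : seq (R -> Prop)) (X : R -> Prop) :=
  match ms with [::] => X | m :: ms' => fil A ms' (pmul A m X) end.

Fixpoint allP (T : Type) (P : T -> Prop) (s : seq T) : Prop :=
  match s with [::] => True | x :: s' => P x /\ allP P s' end.

Lemma modl_fil (R : comNzRingType) (A : R -> Prop) ms X : modl A X -> modl A (fil A ms X).
Proof. elim: ms X => [|m ms IH] X hX //=; apply: IH; exact: modl_pmul. Qed.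

Lemma fil_mono (R : comNzRingType) (A : R -> Prop) ms X Y :
  psub X Y -> psub (fil A ms X) (fil A ms Y).
Proof. elim: ms X Y => [|m ms IH] X Y h //=; apply: IH; exact: pmul_mono. Qed.

Lemma fil_cat (R : comNzRingType) (A : R -> Prop) ms ms' X :
  fil A (ms ++ ms') X = fil A ms' (fil A ms X).
Proof. by elim: ms X => [|m ms IH] X //=. Qed.

Lemma dcc_mono (R : comNzRingType) (A M M' : R -> Prop) :
  psub M' M -> dcc_in A M -> dcc_in A M'.
Proof. move=> h hd N hN; apply: hd => k; have [h1 h2] := hN k; split=> // x /h2; exact: h. Qed.

Lemma acc_fil (R : comNzRingType) (A M : R -> Prop) ms :
  subr A -> dcc_in A M -> allP (cofield A) ms ->
  forall X, modl A X -> psub X M -> psub (fil A ms X) (fun z => z = 0) -> acc_in A X.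
Proof.
move=> hA hd; elim: ms => [|m ms IH] hms X hX hXM /= h0.
  move=> N hN _; exists 0%N => k _ z; have [[a0 _ _] s] := hN k; have [[b0 _ _] s'] := hN 0%N.
  by split=> [/s /h0 ->|/s' /h0 ->].
have [hm [hmm hmA _ _]] := (proj2 hms, proj1 hms).
have hmX : modl A (pmul A m X) := modl_pmul A m X.
have hmXX : psub (pmul A m X) X by apply: pmul_le.
have IH' := IH hm (pmul A m X) hmX (fun z hz => hXM z (hmXX z hz)) h0.
move=> N hN hinc.
pose N1 k := fun z => N k z /\ pmul A m X z.
have [n1 Hn1] : exists n1, forall k, (n1 <= k)%N -> peq (N1 k) (N1 n1).
  apply: IH' => [k|k z [h1 h2]]; last by split=> //; apply: hinc.
  have [[a0 aD aM] _] := hN k; have [b0 bD bM] := hmX.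
  split=> [|z [] //]; split=> [|y z [? ?] [? ?]|a z ha [? ?]]; split; auto.
pose N2 k := fun z => exists u v, [/\ N k u, pmul A m X v & z = u + v].
have [n2 Hn2] : exists n2, forall k, (n2 <= k)%N -> peq (N2 k) (N2 n2).
  apply: (acc_layer hA hmX hX hmXX (proj1 hms)).
  - by move=> a x ha hx; apply: pmul_in.
  - exact: (dcc_mono hXM hd).
  - move=> k; have [[a0 aD aM] hs] := hN k; have [b0 bD bM] := hmX; split.
    + split; first by exists 0, 0; rewrite addr0.
      * move=> _ _ [u [v [hu hv ->]]] [u' [v' [hu' hv' ->]]]; exists (u + u'), (v + v').
        by split; [apply: aD|apply: bD|ring].
      * move=> a _ ha [u [v [hu hv ->]]]; exists (a * u), (a * v).
        by split; [apply: aM|apply: bM|rewrite mulrDr].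
    + by move=> z hz; exists 0, z; rewrite add0r.
    + move=> _ [u [v [hu hv ->]]]; have [_ XD _] := hX; apply: XD; [exact: hs|exact: hmXX].
  - by move=> k _ [u [v [hu hv ->]]]; exists u, v; split=> //; apply: hinc.
exists (maxn n1 n2) => k hk z; split; last by apply: (chain_inc hinc); rewrite ?leq_maxl.
move=> hz.
have hk1 : (n1 <= k)%N by apply: leq_trans hk; rewrite leq_maxl.
have hk2 : (n2 <= k)%N by apply: leq_trans hk; rewrite leq_maxr.
have hm1 : (n1 <= maxn n1 n2)%N by rewrite leq_maxl.
have hm2 : (n2 <= maxn n1 n2)%N by rewrite leq_maxr.
have : N2 (maxn n1 n2) z by apply/(Hn2 _ hm2)/(Hn2 _ hk2); exists z, 0; rewrite addr0; split=> //; by case: hmX.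
move=> [u [v [hu hv ez]]].
have hNk : modl A (N k) by have [h _] := hN k.
have huk : N k u by apply: (chain_inc hinc hk).
have hvk : N1 k v by split=> //; rewrite (_ : v = z - u); [exact: (modlB hA hNk)|rewrite ez; ring].
have [hv' _] : N1 (maxn n1 n2) v by apply/(Hn1 _ hm1)/(Hn1 _ hk1).
by rewrite ez; have [_ D _] := (proj1 (hN (maxn n1 n2))); apply: D.
Qed.
Lemma min_ideal (R : comNzRingType) (A : R -> Prop) (F : (R -> Prop) -> Prop) :
  dcc_in A A -> (forall K, F K -> modl A K /\ psub K A) ->
  forall K0, F K0 -> exists K, F K /\ forall K', F K' -> psub K' K -> psub K K'.
Proof.
move=> hd hF K0 hK0; apply: NNPP => Hn.
have H : forall K : {K | F K}, exists K' : {K | F K},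
    psub (proj1_sig K') (proj1_sig K) /\ ~ psub (proj1_sig K) (proj1_sig K').
  move=> [K hK] /=; apply: NNPP => H1; apply: Hn; exists K; split=> // K' hK' hs.
  apply: NNPP => hn; apply: H1; by exists (exist _ K' hK').
pose step K := proj1_sig (constructive_indefinite_description _ (H K)).
have hstep K : psub (proj1_sig (step K)) (proj1_sig K) /\ ~ psub (proj1_sig K) (proj1_sig (step K))
  := proj2_sig (constructive_indefinite_description _ (H K)).
pose c k := proj1_sig (iter k step (exist _ K0 hK0)).
have [n0 Hn0] := hd c (fun k => hF _ (proj2_sig _)) (fun k => proj1 (hstep _)).
apply: (proj2 (hstep (iter n0 step (exist _ K0 hK0)))) => z hz.
by apply/(Hn0 n0.+1 (leqnSn _)).
Qed.

Lemma cofield_above (R : comNzRingType) (A I : R -> Prop) :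
  subr A -> dcc_in A A -> modl A I -> psub I A -> ~ I 1 ->
  exists m, cofield A m /\ psub I m.
Proof.
move=> hA hd hI hIA hI1.
pose F := fun K => [/\ modl A K, psub K A, psub I K & exists x, K x /\ ~ I x].
have [K [[hK hKA hIK [x [hx hxI]]] hmin]] : exists K, F K /\ forall K', F K' -> psub K' K -> psub K K'.
  apply: (@min_ideal _ A F hd _ A) => [K [h1 h2 _ _] //|].
  split=> //.
  - split; [exact: (sr0 hA)|by move=> u v; apply: srD|move=> a y ha hy; exact: srM].
  - by exists 1; split=> //; exact: sr1.
have [I0 ID IM] := hI.
have xA : A x by apply: hKA.
exists (fun a => A a /\ I (a * x)); split; last first.
  by move=> i hi; split; [exact: hIA|rewrite mulrC; apply: IM].
split.
- split; first by split; [exact: (sr0 hA)|rewrite mul0r].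
  + by move=> u v [hu hu'] [hv hv']; split; [exact: srD|rewrite mulrDl; apply: ID].
  + by move=> c u hc [hu hu']; split; [exact: srM|rewrite -mulrA; apply: IM].
- by move=> a [].
- by move=> [_]; rewrite mul1r.
move=> a ha hna.
have hax : ~ I (a * x) by move=> h; apply: hna; split.
pose K' := fun z => exists i c, [/\ I i, A c & z = i + c * (a * x)].
have hK' : F K'.
  split.
  - split; first by exists 0, 0; split=> //; [exact: (sr0 hA)|rewrite mul0r addr0].
    + move=> _ _ [i [c [hi hc ->]]] [i' [c' [hi' hc' ->]]]; exists (i + i'), (c + c').
      by split; [apply: ID|exact: srD|ring].
    + move=> d _ hd' [i [c [hi hc ->]]]; exists (d * i), (d * c).
      by split; [apply: IM|exact: srM|ring].
  - move=> _ [i [c [hi hc ->]]]; apply: srD => //; first exact: hIA.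
    by apply: srM => //; apply: srM.
  - by move=> i hi; exists i, 0; split=> //; [exact: (sr0 hA)|rewrite mul0r addr0].
  - exists (a * x); split=> //; exists 0, 1; split=> //; [exact: sr1|by rewrite mul1r add0r].
have hK'K : psub K' K.
  have [_ KD KM] := hK.
  move=> _ [i [c [hi hc ->]]]; apply: KD; first exact: hIK.
  by apply: (KM) => //; apply: (KM).
have [i [c [hi hc ex]]] := hmin K' hK' hK'K x hx.
exists c; split=> //; split; first by apply: (srB hA); [exact: srM|exact: sr1].
have e : i = x - c * (a * x) by rewrite {1}ex; ring.
have -> : (c * a - 1) * x = - i by rewrite e; ring.
exact: (modlN hA hI).
Qed.
Definition inter (R : comNzRingType) (A : R -> Prop) (ms : seq (R -> Prop)) :=
  fun z => A z /\ allP (fun m => m z) ms.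

Lemma modl_inter (R : comNzRingType) (A : R -> Prop) ms :
  subr A -> allP (cofield A) ms -> modl A (inter A ms).
Proof.
move=> hA; elim: ms => [_|m ms IH [[[m0 mD mM] _ _ _] hms]].
  by split; [split=> //; exact: (sr0 hA)|move=> x y [hx _] [hy _]; split=> //; apply: srD
            |move=> a x ha [hx _]; split=> //; apply: srM].
have [i0 iD iM] := IH hms.
split.
- by split; [exact: (sr0 hA)|split=> //; exact: (proj2 i0)].
- move=> x y [hx [hmx hx']] [hy [hmy hy']]; split; first exact: srD.
  split; first exact: mD.
  by have [] := iD x y (conj hx hx') (conj hy hy').
- move=> a x ha [hx [hmx hx']]; split; first exact: srM.
  split; first exact: mM.
  by have [] := iM a x ha (conj hx hx').
Qed.

Lemma jac (R : comNzRingType) (A : R -> Prop) : subr A -> dcc_in A A ->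
  exists ms0, allP (cofield A) ms0 /\ forall m, cofield A m -> psub (inter A ms0) m.
Proof.
move=> hA hd.
pose F := fun K => exists ms, allP (cofield A) ms /\ K = inter A ms.
have [K [[ms [hms ->]] hmin]] : exists K, F K /\ forall K', F K' -> psub K' K -> psub K K'.
  apply: (@min_ideal _ A F hd _ (inter A [::])); last by exists [::].
  move=> _ [ms [hms ->]]; split; first exact: modl_inter.
  by move=> z [].
exists ms; split=> // m hm z hz.
have hF : F (inter A (m :: ms)) by exists (m :: ms).
have := hmin _ hF (fun z hz => conj (proj1 hz) (proj2 (proj2 hz))) z hz.
by move=> [_ []].
Qed.

Lemma jac_unit (R : comNzRingType) (A : R -> Prop) (J : R -> Prop) j :
  subr A -> dcc_in A A -> psub J A -> (forall m, cofield A m -> psub J m) -> J j ->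
  exists c, A c /\ c * (1 - j) = 1.
Proof.
move=> hA hd hJA hJ hj; apply: NNPP => hn.
pose I := fun z => exists c, A c /\ z = c * (1 - j).
have jA : A j by apply: hJA.
have [m [hm hIm]] : exists m, cofield A m /\ psub I m.
  apply: (cofield_above hA hd).
  - split; first by exists 0; split; [exact: (sr0 hA)|rewrite mul0r].
    + move=> _ _ [c [hc ->]] [c' [hc' ->]]; exists (c + c'); split; [exact: srD|ring].
    + move=> a _ ha [c [hc ->]]; exists (a * c); split; [exact: srM|ring].
  - move=> _ [c [hc ->]]; apply: srM => //; apply: (srB hA) => //; exact: sr1.
  - move=> [c [hc e]]; apply: hn; by exists c.
have [[m0 mD mM] _ m1 _] := hm.
apply: m1; rewrite (_ : 1 = (1 - j) + j); last by ring.
apply: mD; last by apply: (hJ m hm).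
by apply: hIm; exists 1; split; [exact: sr1|rewrite mul1r].
Qed.
Lemma nil_J (R : comNzRingType) (A J : R -> Prop) :
  subr A -> dcc_in A A -> modl A J -> psub J A ->
  (forall m, cofield A m -> psub J m) ->
  exists k, psub (iter k (pmul A J) A) (fun z => z = 0).
Proof.
move=> hA hd hJ hJA hJm.
pose D k := iter k (pmul A J) A.
have hAm : modl A A.
  by split; [exact: (sr0 hA)|by move=> u v; apply: srD|move=> a y ha hy; exact: srM].
have hD k : modl A (D k) /\ psub (D k) A.
  elim: k => [|k [h1 h2]] /=; first by split.
  split; first exact: modl_pmul.
  by move=> z /(pmul_le hJA h1) /h2.
have hdec k : psub (D k.+1) (D k) by apply: pmul_le => //; exact: (proj1 (hD k)).
have [k0 Hk0] := hd D hD hdec.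
pose I := D k0.
have hIJ : psub I (pmul A J I) by move=> z hz; apply/(Hk0 k0.+1 (leqnSn _)).
exists k0 => z hz; apply: NNPP => hz0.
pose F := fun K => [/\ modl A K, psub K A & exists y x, [/\ I y, K x & y * x <> 0]].
have [K [[hK hKA [y [x [hy hx hyx]]]] hmin]] :
    exists K, F K /\ forall K', F K' -> psub K' K -> psub K K'.
  apply: (@min_ideal _ A F hd _ A); first by move=> K [].
  split=> //; exists z, 1; split=> //; [exact: sr1|by rewrite mulr1].
have xA : A x by apply: hKA.
have [J0 JD JM] := hJ.
pose L := fun w => exists j, J j /\ w = j * x.
have hLF : F L.
  split.
  - split; first by exists 0; rewrite mul0r.
    + by move=> _ _ [j [hj ->]] [j' [hj' ->]]; exists (j + j'); rewrite mulrDl; split=> //; apply: JD.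
    + by move=> a _ ha [j [hj ->]]; exists (a * j); rewrite mulrA; split=> //; apply: JM.
  - by move=> _ [j [hj ->]]; apply: srM => //; apply: hJA.
  - apply: NNPP => hn; apply: hyx.
    have := hIJ y hy; apply: (@pmul_sub _ A J I (fun w => w * x = 0)).
      split; first by rewrite mul0r.
      + by move=> u v hu hv; rewrite mulrDl hu hv addr0.
      + by move=> a u ha hu; rewrite -mulrA hu mulr0.
    move=> a u ha hu; case: (eqVneq (u * (a * x)) 0) => [e|ne].
      by rewrite -mulrA mulrCA e.
    exfalso; apply: hn; exists u, (a * x); split; [exact: hu|by exists a|exact/eqP].
have hLK : psub L K.
  have [_ _ KM] := hK.
  by move=> _ [j [hj ->]]; apply: KM => //; apply: hJA.
have [j [hj ex]] := hmin L hLF hLK x hx.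
have [c [hc hc1]] := jac_unit hA hd hJA hJm hj.
apply: hyx; suff -> : x = 0 by rewrite mulr0.
by rewrite -[x]mul1r -hc1 -mulrA mulrBl mul1r -ex subrr mulr0.
Qed.
Lemma allP_cat (T : Type) (P : T -> Prop) s t : allP P s -> allP P t -> allP P (s ++ t).
Proof. by elim: s => [|x s IH] //= [h1 h2] ht; split=> //; apply: IH. Qed.

Lemma allP_flat (T : Type) (P : T -> Prop) s k : allP P s -> allP P (flatten (nseq k s)).
Proof. by move=> h; elim: k => [|k IH] //=; apply: allP_cat. Qed.

Lemma int_prod (R : comNzRingType) (A : R -> Prop) m ms :
  subr A -> cofield A m -> allP (cofield A) ms ->
  psub (pmul A (inter A ms) m) (inter A (m :: ms)).
Proof.
move=> hA hm hms; apply: pmul_sub; first by apply: modl_inter => //; split.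
have [[m0 mD mM] mA _ _] := hm.
move=> c a [hc hcs] ha; have aA : A a by apply: mA.
split; first exact: (srM hA hc aA).
split; first by apply: mM.
elim: ms hms hcs => [|m' ms IH] //= [[[_ _ mM'] _ _ _] hms] [h1 h2].
split; last exact: IH.
by rewrite mulrC; apply: mM'.
Qed.

Lemma fil_inter (R : comNzRingType) (A : R -> Prop) ms :
  subr A -> allP (cofield A) ms ->
  forall X, modl A X -> psub (fil A ms X) (pmul A (inter A ms) X).
Proof.
move=> hA; elim: ms => [|m ms IH] hms X hX /=.
  by move=> x hx; rewrite -(mul1r x); apply: pmul_in => //; split=> //; exact: sr1.
move=> z /(IH (proj2 hms) _ (modl_pmul A m X)) /(@pmul_assoc _ A).
by apply: pmul_mono => //; apply: int_prod => //; [exact: (proj1 hms)|exact: (proj2 hms)].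
Qed.

Theorem acc_span (R : comNzRingType) (A : R -> Prop) L :
  subr A -> dcc_in A A -> acc_in A (span A L).
Proof.
move=> hA hd.
have [ms0 [hms0 hJm]] := jac hA hd.
pose J := inter A ms0.
have hJ : modl A J by apply: modl_inter.
have hJA : psub J A by move=> z [].
have [k hk] := nil_J hA hd hJ hJA hJm.
have hX := modl_span L hA.
apply: (@acc_fil _ A (span A L) (flatten (nseq k ms0)) hA (@dcc_span _ A L hA hd) (allP_flat k hms0) _ hX) => //.
have H2 : forall k X, modl A X -> psub (fil A (flatten (nseq k ms0)) X) (iter k (pmul A J) X).
  elim=> [|k' IH] X hX'; first by [].
  have -> : flatten (nseq k'.+1 ms0) = ms0 ++ flatten (nseq k' ms0) by [].
  rewrite fil_cat iterSr => z hz.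
  have : fil A (flatten (nseq k' ms0)) (pmul A J X) z.
    apply: (fil_mono (ms := flatten (nseq k' ms0)) _ hz) => w hw.
    exact: (@fil_inter _ A ms0 hA hms0 X hX').
  by move/(IH _ (modl_pmul A J X)).
have H3 : forall k, psub (iter k (pmul A J) (span A L)) (pmul A (iter k (pmul A J) A) (span A L)).
  elim=> [|k' IH] /=; first exact: (pmul_top hA).
  by move=> z /(pmul_mono (fun z h => h) IH) /(@pmul_assoc _ A).
move=> z /(H2 k _ hX) /H3; apply: (@pmul_sub _ A _ _ (fun z => z = 0)).
  by split=> [|x y -> ->|a x _ ->]; rewrite ?addr0 ?mulr0.
by move=> a x /hk -> _; rewrite mul0r.
Qed.
Fixpoint pw (R : comNzRingType) (x : R) (L : seq R) (d : nat) : seq R :=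
  match d with 0 => [::] | d'.+1 => pw x L d' ++ map ( *%R (x ^+ d')) L end.

Lemma span_cat (R : comNzRingType) (A : R -> Prop) L1 L2 z :
  span A (L1 ++ L2) z <-> exists z1 z2, [/\ span A L1 z1, span A L2 z2 & z = z1 + z2].
Proof.
elim: L1 z => [|y L1 IH] z /=.
  by split=> [h|[z1 [z2 [-> h ->]]]]; [exists 0, z; rewrite add0r|rewrite add0r].
split.
- move=> [a [w [ha /IH [z1 [z2 [h1 h2 ->]]] ->]]].
  by exists (a * y + z1), z2; split=> //; [exists a, z1|rewrite addrA].
- move=> [_ [z2 [[a [w [ha hw ->]]] h2 ->]]]; exists a, (w + z2); split=> //; last by rewrite addrA.
  by apply/IH; exists w, z2.
Qed.

Lemma span_map (R : comNzRingType) (A : R -> Prop) c L z :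
  span A (map ( *%R c) L) z <-> exists w, span A L w /\ z = c * w.
Proof.
elim: L z => [|y L IH] z /=.
  by split=> [->|[w [-> ->]]]; [exists 0; rewrite mulr0|rewrite mulr0].
split.
- move=> [a [w [ha /IH [w' [h' ->]] ->]]]; exists (a * y + w'); split; first by exists a, w'.
  by rewrite mulrDr mulrCA.
- move=> [_ [[a [w [ha hw ->]]] ->]]; exists a, (c * w); split=> //; last by rewrite mulrDr mulrCA.
  by apply/IH; exists w.
Qed.

Lemma span_pw (R : comNzRingType) (A : R -> Prop) x L d z : subr A ->
  span A (pw x L d) z <-> exists w : nat -> R, (forall i, span A L (w i)) /\
     z = \sum_(i < d) x ^+ i * w i.
Proof.
move=> hA; elim: d z => [|d IH] z /=.
  split.
    move=> ->; exists (fun _ => 0); rewrite big_ord0; split=> // i.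
    by case: (modl_span L hA).
  by move=> [w [_ ->]]; rewrite big_ord0.
rewrite span_cat; split.
- move=> [z1 [z2 [/IH [w [hw ->]] /span_map [v [hv ->]] ->]]].
  exists (fun i => if i == d then v else w i); split; first by move=> i; case: (i == d).
  rewrite big_ord_recr /= eqxx; congr (_ + _); apply: eq_bigr => i _.
  by rewrite (ltn_eqF (ltn_ord i)).
- move=> [w [hw ->]]; rewrite big_ord_recr /=; exists (\sum_(i < d) x ^+ i * w i), (x ^+ d * w d).
  by split=> //; [apply/IH; exists w|apply/span_map; exists (w d)].
Qed.
Lemma fin_gen (R : comNzRingType) (R0 : {pred R}) :
  subr (fun x => x \in R0) -> integral_over R0 ->
  forall s : seq R, exists Ls, span (fun x => x \in R0) Ls 1 /\
    forall y, y \in s -> forall z, span (fun x => x \in R0) Ls z ->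
      span (fun x => x \in R0) Ls (y * z).
Proof.
move=> hA hint; set A := fun x => x \in R0.
have hS L := modl_span L hA.
elim=> [|x s IH].
  exists [:: 1]; split=> //; exists 1, 0; split=> //; [exact: (sr1 hA)|by rewrite mulr1 addr0].
have [Ls' [h1 hmul]] := IH.
have [p [hmon hover hroot]] := hint x.
have hlead : lead_coef p = 1 by apply/monicP.
have hcoef : forall i, A (p`_i).
  move=> i; move: hover; rewrite qualifE /= => /(all_nthP 0) hc.
  case: (ltnP i (size p)) => hi; first exact: hc.
  by rewrite nth_default //; exact: (sr0 hA).
have hr : p.[x] = 0 by apply/eqP.
rewrite horner_coef in hr.
case e: (size p) hr hlead => [|[|d']] hr hlead.
- by move: hlead; rewrite lead_coefE e nth_default ?e // => /esym/eqP; rewrite oner_eq0.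
- move: hr; rewrite big_ord_recr big_ord0 /= add0r expr0 mulr1.
  by move: hlead; rewrite lead_coefE e /= => -> /eqP; rewrite oner_eq0.
move: hr; rewrite big_ord_recr /=.
have -> : p`_d'.+1 = 1 by move: hlead; rewrite lead_coefE e.
rewrite mul1r => hr.
have Hx : x ^+ d'.+1 = - \sum_(i < d'.+1) p`_i * x ^+ i.
  by apply/eqP; rewrite -addr_eq0 addrC hr.
exists (pw x Ls' d'.+1); split.
  apply/(span_pw _ _ _ _ hA); exists (fun i => if i == 0%N then 1 else 0); split.
    by move=> i; case: (i == 0%N) => //; case: (hS Ls').
  rewrite big_ord_recl /= expr0 mulr1 big1 ?addr0 // => i _.
  by rewrite mulr0.
move=> y; rewrite inE => /orP [/eqP ->|hy] z /(span_pw _ _ _ _ hA) [w [hw ->]];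
  apply/(span_pw _ _ _ _ hA); last first.
  exists (fun i => y * w i); split; first by move=> i; apply: hmul.
  by rewrite mulr_sumr; apply: eq_bigr => i _; rewrite mulrCA.
pose sh := fun i => if i is j.+1 then w j else 0.
exists (fun i => sh i - p`_i * w d'); split.
  move=> i; apply: (modlB hA (hS Ls')); first by case: i => [|j] /=; [case: (hS Ls')|apply: hw].
  have [_ _ hM] := hS Ls'; apply: hM; [exact: hcoef|exact: hw].
have E1 : \sum_(i < d'.+1) x ^+ i * (sh i - p`_i * w d') =
   \sum_(i < d'.+1) x ^+ i * sh i - (\sum_(i < d'.+1) p`_i * x ^+ i) * w d'.
  by rewrite mulr_suml -sumrB; apply: eq_bigr => i _; ring.
rewrite E1 -mulNr -Hx [in RHS]big_ord_recl /sh /= mulr0 add0r mulr_sumr big_ord_recr /=.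
congr (_ + _); last by rewrite mulrA -exprS.
by apply: eq_bigr => i _; rewrite /bump leq0n add1n /= mulrA -exprS.
Qed.
Definition asb (P : Prop) : bool := if excluded_middle_informative P then true else false.
Lemma asbP (P : Prop) : asb P <-> P.
Proof. by rewrite /asb; case: excluded_middle_informative. Qed.

Lemma sc_subr (R : comNzRingType) (T : {pred R}) :
  subring_closed T -> subr (fun x => x \in T).
Proof. case=> h1 hB hM; split; [exact: h1|move=> x y hx hy; exact: hB|move=> x y hx hy; exact: hM]. Qed.



Lemma gen_subr (R : comNzRingType) (R0 : {pred R}) s :
  subr (gen_subring R0 s).
Proof.
split.
- by move=> T [h1 _ _] _ _.
- move=> x y hx hy T hT h0 hs; have := sc_subr hT => hT'.
  by apply: (srB hT'); [apply: hx|apply: hy].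
- move=> x y hx hy T hT h0 hs; have := sc_subr hT => hT'.
  by apply: (srM hT'); [apply: hx|apply: hy].
Qed.

Lemma gen_R0 (R : comNzRingType) (R0 : {pred R}) s x : x \in R0 -> gen_subring R0 s x.
Proof. by move=> hx T _ h _; apply: h. Qed.

Lemma gen_s (R : comNzRingType) (R0 : {pred R}) s x : x \in s -> gen_subring R0 s x.
Proof. by move=> hx T _ _ h; apply: h. Qed.

Lemma gen_cat (R : comNzRingType) (R0 : {pred R}) s1 s2 x :
  gen_subring R0 s1 x -> gen_subring R0 (s1 ++ s2) x.
Proof. move=> hx T hT h0 hs; apply: hx => // y hy; apply: hs; by rewrite mem_cat hy. Qed.
Lemma gen_catr (R : comNzRingType) (R0 : {pred R}) s1 s2 x :
  gen_subring R0 s2 x -> gen_subring R0 (s1 ++ s2) x.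
Proof. move=> hx T hT h0 hs; apply: hx => // y hy; apply: hs; by rewrite mem_cat hy orbT. Qed.

Lemma gen_in_span (R : comNzRingType) (R0 : {pred R}) s Ls :
  subr (fun x => x \in R0) ->
  span (fun x => x \in R0) Ls 1 ->
  (forall y, y \in s -> forall z, span (fun x => x \in R0) Ls z ->
      span (fun x => x \in R0) Ls (y * z)) ->
  forall z, gen_subring R0 s z -> span (fun x => x \in R0) Ls z.
Proof.
move=> hA h1 hmul z hz.
have [s0 sD sM] := modl_span Ls hA.
pose T : {pred R} := [pred t | asb (forall w, span (fun x => x \in R0) Ls w ->
                                             span (fun x => x \in R0) Ls (t * w))].
have hT : forall t, t \in T <-> forall w, span (fun x => x \in R0) Ls w ->
                                             span (fun x => x \in R0) Ls (t * w).
  by move=> t; rewrite inE; apply: asbP.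
have : z \in T.
  apply: hz.
  - split.
    + by apply/hT => w; rewrite mul1r.
    + move=> u v /hT hu /hT hv; apply/hT => w hw; rewrite mulrBl.
      by apply: (modlB hA (modl_span Ls hA)); [apply: hu|apply: hv].
    + by move=> u v /hT hu /hT hv; apply/hT => w hw; rewrite -mulrA; apply: hu; apply: hv.
  - by move=> a ha; apply/hT => w hw; apply: sM.
  - by move=> y hy; apply/hT; apply: hmul.
by move/hT/(_ 1 h1); rewrite mulr1.
Qed.

Lemma T_noeth (R : comNzRingType) (R0 : {pred R}) s :
  subr (fun x => x \in R0) -> dcc_in (fun x => x \in R0) (fun x => x \in R0) ->
  integral_over R0 ->
  forall I : nat -> R -> Prop,
    (forall k, is_ideal 0 +%R *%R (gen_subring R0 s) (I k)) ->
    (forall k x, I k x -> I k.+1 x) ->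
    exists N, forall k, (N <= k)%N -> forall x, I k x <-> I N x.
Proof.
move=> hA hd hint I hI hinc.
have [Ls [h1 hmul]] := fin_gen hA hint s.
have := @acc_span _ _ Ls hA hd I; apply.
  move=> k; have [hs h0 hD hM] := hI k; split.
    split=> // a x ha hx; apply: hM => //; exact: gen_R0.
  by move=> x /hs; apply: gen_in_span.
by move=> k x; apply: hinc.
Qed.
Lemma sum_one (R : comNzRingType) n d (F : {ffun 'I_n -> 'I_d.+1} -> R) (m : mono n) :
  (forall i, m i = 0%N) ->
  \sum_(a : {ffun 'I_n -> 'I_d.+1} | [forall i, (a i <= m i)%N]) F a = F [ffun => ord0].
Proof.
move=> hm; rewrite (big_pred1 [ffun => ord0]) // => a /=.
apply/forallP/eqP => [H|-> i]; last by rewrite ffunE hm.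
apply/ffunP => i; rewrite ffunE; apply/val_inj => /=.
by have := H i; rewrite hm leqn0 => /eqP.
Qed.

Definition mono0 n : mono n := [ffun _ => 0%N].

Lemma psmul0 (R : comNzRingType) n (f g : pser R n) :
  ps_mul f g (mono0 n) = f (mono0 n) * g (mono0 n).
Proof.
rewrite /ps_mul sum_one; last by move=> i; rewrite ffunE.
by congr (f _ * g _); apply/ffunP => i; rewrite !ffunE.
Qed.

Theorem mainTheorem1 (R : comNzRingType) (R0 : {pred R}) (n : nat) :
  subring_closed R0 ->
  krull_dim0 R ->
  ring_artinian (fun x => x \in R0) ->
  integral_over R0 ->
  (1 <= n)%N ->
  ~ ring_noetherian (fun _ : R => True) ->
  ~ noetherian_in (@ps_zero R n) (@ps_add R n) (@ps_mul R n)
      (artinian_pser R0 (n:=n)) /\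
  exists f : pser R n, ~ artinian_pser R0 f.
Proof.
move=> hsc _ hart hint hn hnot.
have hA : subr (fun x => x \in R0) := sc_subr hsc.
have hd : dcc_in (fun x => x \in R0) (fun x => x \in R0).
  move=> N hN hdec; apply: hart => //.
  move=> k; have [[h0 hD hM] hs] := hN k; by split.
split.
- move=> Hno; apply: hnot => I hI hinc.
  pose K k := fun f : pser R n => artinian_pser R0 f /\ I k (f (mono0 n)).
  have [N HN] : exists N, forall k, (N <= k)%N -> forall f, K k f <-> K N f.
    apply: Hno => [k|k f [h1 h2]]; last by split=> //; apply: hinc.
    have [_ I0 ID IM] := hI k.
    split.
    + by move=> f [].
    + split=> //; exists [::] => m; exact: (sr0 (gen_subr R0 [::])).
    + move=> f g [[s1 hs1] hf] [[s2 hs2] hg]; split; last exact: ID.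
      exists (s1 ++ s2) => m; apply: (srD (gen_subr R0 _)).
        exact: gen_cat. exact: gen_catr.
    + move=> a f [s1 hs1] [[s2 hs2] hf]; split; last by rewrite psmul0; apply: IM.
      exists (s1 ++ s2) => m; rewrite /ps_mul.
      apply: (big_ind (fun z => gen_subring R0 (s1 ++ s2) z)).
      * exact: (sr0 (gen_subr R0 _)).
      * by move=> x y hx hy; apply: (srD (gen_subr R0 _)).
      * move=> i _; apply: (srM (gen_subr R0 _)); [exact: gen_cat|exact: gen_catr].
  exists N => k hk x.
  have hc : artinian_pser R0 (fun _ : mono n => x).
    by exists [:: x] => m; apply: gen_s; rewrite inE.
  split=> h.
  + by have [_ h'] := (proj1 (HN k hk (fun _ => x)) (conj hc h)).
  + by have [_ h'] := (proj2 (HN k hk (fun _ => x)) (conj hc h)).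
- apply: NNPP => Hall; apply: hnot => I hI hinc; apply: NNPP => Hs.
  have W := no_stab_witness (N := I) (fun k x => hinc k x) Hs.
  pose g k := proj1_sig (constructive_indefinite_description _ (W k)).
  have hg k : [/\ (k < (g k).1)%N, I (g k).1 (g k).2 & ~ I k (g k).2]
    := proj2_sig (constructive_indefinite_description _ (W k)).
  pose i0 : 'I_n := Ordinal hn.
  pose f := fun m : mono n => (g (m i0)).2.
  have [s hs] : artinian_pser R0 f by apply: NNPP => hf; apply: Hall; exists f.
  pose J k := fun z => gen_subring R0 s z /\ I k z.
  have [N0 HN0] : exists N, forall k, (N <= k)%N -> forall x, J k x <-> J N x.
    apply: (@T_noeth _ R0 s hA hd hint) => [k|k x [h1 h2]]; last by split=> //; apply: hinc.
    have [_ I0 ID IM] := hI k.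
    split.
    + by move=> x [].
    + by split=> //; exact: (sr0 (gen_subr R0 s)).
    + by move=> x y [hx1 hx2] [hy1 hy2]; split; [apply: (srD (gen_subr R0 s))|apply: ID].
    + by move=> a x ha [hx1 hx2]; split; [apply: (srM (gen_subr R0 s))|apply: IM].
  have [hlt hin hout] := hg N0.
  have hx : gen_subring R0 s (g N0).2.
    by have := hs [ffun _ => N0]; rewrite /f ffunE.
  apply: hout; have [_ h] := proj1 (HN0 _ (ltnW hlt) (g N0).2) (conj hx hin); exact: h.
Qed.
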